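(* Let $(I,\preccurlyeq)$ be a directed set, let $S(\Lambda^{\succcurlyeq})$ be a contravariant direct spectrum over $(I,\preccurlyeq)$ with sets $\lambda_0(i)$, transports $\lambda^{\succcurlyeq}_{ji}$ and Bishop spaces $\mathcal F_i=(\lambda_0(i),F_i)$, let $(J,e,\mathrm{cof}_J)$ be a cofinal subset of $I$, and let $S(\Lambda^{\succcurlyeq})\circ e$ be the relative spectrum of $S(\Lambda^{\succcurlyeq})$ to $J$, with Bishop spaces $\mathcal F_j:=\mathcal F_{e(j)}$. Then $\underset{\leftarrow}{\mathrm{Lim}}\,\mathcal F_j\simeq\underset{\leftarrow}{\mathrm{Lim}}\,\mathcal F_i$, where the left side is the inverse limit of $S(\Lambda^{\succcurlyeq})\circ e$ over $J$.
   Context: Work in Bishop-style constructive mathematics (no choice principles). Each set has its own equality; functions respect it; $e$ is an embedding if $e(j)=e(j')\Rightarrow j=j'$. A directed set: a set with a reflexive transitive relation respecting equality, any two elements having a common upper bound. A contravariant direct family over $(I,\preccurlyeq)$: sets $\lambda_0(i)$ and, for $i\preccurlyeq j$, functions $\lambda^{\succcurlyeq}_{ji}:\lambda_0(j)\to\lambda_0(i)$ with $\lambda^{\succcurlyeq}_{ii}=\mathrm{id}$ and $\lambda^{\succcurlyeq}_{ki}=\lambda^{\succcurlyeq}_{ji}\circ\lambda^{\succcurlyeq}_{kj}$ for $i\preccurlyeq j\preccurlyeq k$. Bishop spaces: a Bishop topology on $X$ is a set $F$ of functions $X\to\mathbb R$ containing constants, closed under addition, composition with functions $\mathbb R\to\mathbb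 R$ uniformly continuous on every $[-n,n]$, and uniform limits; $\bigvee F_0$ = least Bishop topology containing $F_0$; Bishop morphism $(X,F)\to(Y,G)$: a function $h$ with $g\circ h\in F$ for all $g\in G$; Bishop isomorphism: bijective Bishop morphism with Bishop-morphism inverse; $\simeq$: Bishop isomorphic. A contravariant direct spectrum: a contravariant direct family with Bishop topologies $F_i$ such that all $\lambda^{\succcurlyeq}_{ji}$ are Bishop morphisms. Cofinal subset $(J,e,\mathrm{cof}_J)$: a set $J$, an embedding $e:J\to I$ (with $j\preccurlyeq j'$ iff $e(j)\preccurlyeq e(j')$), a function $\mathrm{cof}_J:I\to J$ with $\mathrm{cof}_J(e(j))=j$, $i\preccurlyeq i'\Rightarrow\mathrm{cof}_J(i)\preccurlyeq\mathrm{cof}_J(i')$, and $i\preccurlyeq e(\mathrm{cof}_J(i))$. The relative spectrum over $(J,\preccurlyeq)$ has sets $\lambda_0(e(j))$, transports $\lambda^{\succcurlyeq}_{e(j')e(j)}$ for $j\preccurlyeq j'$, topologies $F_{e(j)}$. Inverse limit: $\prod^{\succcurlyeq}\lambda_0(i)$ = dependent assignments $\Phi$ with $\Phi_i\in\lambda_0(i)$ and $\Phi_i=\lambda^{\succcurlyeq}_{ji}(\Phi_j)$ for $i\preccurlyeq j$ (pointwise equality); $\pi_i(\Phi)=\Phi_i$; $\underset{\leftarrow}{\mathrm{Lim}}\,\mathcal F_i=(\prod^{\succcurlyeq}\lambda_0(i),\bigvee\{f\circ\pi_i:i\in I,f\in F_i\})$. *)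

(* Defs.v *)
From Stdlib Require Import Reals RelationClasses.
Open Scope R_scope.

Record BSet := { bcar :> Type; beq : bcar -> bcar -> Prop;
                 beq_equiv : Equivalence beq }.
Arguments beq {b} _ _.

Definition respects {X Y : BSet} (f : X -> Y) : Prop :=
  forall x x', beq x x' -> beq (f x) (f x').

Definition embedding {X Y : BSet} (e : X -> Y) : Prop :=
  respects e /\ forall x x', beq (e x) (e x') -> beq x x'.

Record DirectedSet := {
  dcar :> BSet;
  dle : dcar -> dcar -> Prop;
  dle_refl : forall i, dle i i;
  dle_trans : forall i j k, dle i j -> dle j k -> dle i k;
  dle_resp : forall i i' j j', beq i i' -> beq j j' -> dle i j -> dle i' j';
  dle_dir : forall i j, exists k, dle i k /\ dle j k }.
Arguments dle {d} _ _.

Definition Bic (phi : R -> R) : Prop :=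
  forall (n : nat) (eps : R), 0 < eps -> exists delta, 0 < delta /\
    forall x y, Rabs x <= INR n -> Rabs y <= INR n -> Rabs (x - y) < delta ->
      Rabs (phi x - phi y) < eps.

Definition unif_conv {X : Type} (fs : nat -> X -> R) (f : X -> R) : Prop :=
  forall eps, 0 < eps -> exists N : nat, forall n, (N <= n)%nat ->
    forall x, Rabs (fs n x - f x) <= eps.

Definition IsBTop (X : BSet) (F : (X -> R) -> Prop) : Prop :=
  (forall f, F f -> forall x x', beq x x' -> f x = f x') /\
  (forall a : R, F (fun _ => a)) /\
  (forall f g, F f -> F g -> F (fun x => f x + g x)) /\
  (forall f phi, F f -> Bic phi -> F (fun x => phi (f x))) /\
  (forall fs f, (forall n, F (fs n)) -> unif_conv fs f -> F f).

Inductive BGen (X : BSet) (F0 : (X -> R) -> Prop) : (X -> R) -> Prop :=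
| bgen_base : forall f, F0 f -> BGen X F0 f
| bgen_const : forall a : R, BGen X F0 (fun _ => a)
| bgen_add : forall f g, BGen X F0 f -> BGen X F0 g ->
    BGen X F0 (fun x => f x + g x)
| bgen_comp : forall f phi, BGen X F0 f -> Bic phi ->
    BGen X F0 (fun x => phi (f x))
| bgen_lim : forall fs f, (forall n, BGen X F0 (fs n)) -> unif_conv fs f ->
    BGen X F0 f.

Record BSpace := { bset :> BSet; btop : (bset -> R) -> Prop }.

Definition BMorph {X Y : BSpace} (h : X -> Y) : Prop :=
  respects h /\ forall g, btop Y g -> btop X (fun x => g (h x)).

Definition BIso (X Y : BSpace) : Prop :=
  exists (h : X -> Y) (g : Y -> X),
    BMorph h /\ BMorph g /\
    (forall x, beq (g (h x)) x) /\ (forall y, beq (h (g y)) y).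

Record ContraSpectrum (I : DirectedSet) := {
  lam0 : I -> BSet;
  lam1 : forall i j : I, dle i j -> lam0 j -> lam0 i;
  lam1_resp : forall i j (p : dle i j), respects (lam1 i j p);
  lam1_id : forall i (p : dle i i) x, beq (lam1 i i p x) x;
  lam1_comp : forall i j k (pij : dle i j) (pjk : dle j k) (pik : dle i k) x,
      beq (lam1 i k pik x) (lam1 i j pij (lam1 j k pjk x));
  topo : forall i, (lam0 i -> R) -> Prop;
  topo_btop : forall i, IsBTop (lam0 i) (topo i);
  lam1_morph : forall i j (p : dle i j) g, topo i g ->
      topo j (fun x => g (lam1 i j p x)) }.
Arguments lam0 {I} _ _.
Arguments lam1 {I} _ _ _ _ _.
Arguments topo {I} _ _ _.

(* Cofinal subset (J, e, cof_J) of a directed set I; J carries the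
   preorder j <= j' iff e j <= e j'. *)
Record Cofinal (I : DirectedSet) := {
  cJ : BSet;
  ce : cJ -> I;
  ccof : I -> cJ;
  ce_emb : embedding ce;
  ccof_resp : respects ccof;
  ccof_e : forall j, beq (ccof (ce j)) j;
  ccof_mono : forall i i' : I, dle i i' -> dle (ce (ccof i)) (ce (ccof i'));
  ccof_up : forall i : I, dle i (ce (ccof i)) }.
Arguments cJ {I} _.
Arguments ce {I} _ _.
Arguments ccof {I} _ _.

Section InvLim.
Variables (I : BSet) (le : I -> I -> Prop) (l0 : I -> BSet)
  (l1 : forall i j, le i j -> l0 j -> l0 i)
  (F : forall i, (l0 i -> R) -> Prop).

Definition LimCar : Type :=
  { Phi : forall i, l0 i |
    forall i j (p : le i j), beq (Phi i) (l1 i j p (Phi j)) }.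

Definition LimEq (a b : LimCar) : Prop :=
  forall i, beq (proj1_sig a i) (proj1_sig b i).

Lemma LimEq_equiv : Equivalence LimEq.
Proof.
  split.
  - intros a i. apply (@Equivalence_Reflexive _ _ (beq_equiv (l0 i))).
  - intros a b H i. apply (@Equivalence_Symmetric _ _ (beq_equiv (l0 i))), H.
  - intros a b c H1 H2 i.
    exact (@Equivalence_Transitive _ _ (beq_equiv (l0 i)) _ _ _ (H1 i) (H2 i)).
Qed.

Definition LimSet : BSet := {| bcar := LimCar; beq := LimEq;
                               beq_equiv := LimEq_equiv |}.

Definition proj (i : I) (a : LimSet) : l0 i := proj1_sig a i.

Definition LimSubbase (h : LimSet -> R) : Prop :=
  exists i (f : l0 i -> R), F i f /\ forall a, h a = f (proj i a).

Definition InvLim : BSpace := {| bset := LimSet; btop := BGen LimSet LimSubbase |}.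
End InvLim.

Definition SpecLim {I : DirectedSet} (S : ContraSpectrum I) : BSpace :=
  InvLim I (@dle I) (lam0 S) (lam1 S) (topo S).

Definition RelLim {I : DirectedSet} (S : ContraSpectrum I) (C : Cofinal I)
  : BSpace :=
  InvLim (cJ C) (fun j j' => dle (ce C j) (ce C j'))
    (fun j => lam0 S (ce C j))
    (fun j j' p => lam1 S (ce C j) (ce C j') p)
    (fun j => topo S (ce C j)).

(* Main.v *)
Require Import Defs.
From Stdlib Require Import Reals RelationClasses.

Lemma bt {X : BSet} (a b c : X) : beq a b -> beq b c -> beq a c.
Proof. apply (@Equivalence_Transitive _ _ (beq_equiv X)). Qed.
Lemma bs {X : BSet} (a b : X) : beq a b -> beq b a.
Proof. apply (@Equivalence_Symmetric _ _ (beq_equiv X)). Qed.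
Lemma br {X : BSet} (a : X) : beq a a.
Proof. apply (@Equivalence_Reflexive _ _ (beq_equiv X)). Qed.

Lemma BGen_pull (X Y : BSet) (F0X : (X -> R) -> Prop) (F0Y : (Y -> R) -> Prop)
  (m : X -> Y) :
  (forall f, F0Y f -> BGen X F0X (fun x => f (m x))) ->
  forall g, BGen Y F0Y g -> BGen X F0X (fun x => g (m x)).
Proof.
  intros Hb g Hg. induction Hg.
  - apply Hb; auto.
  - apply bgen_const.
  - apply (bgen_add X F0X (fun x => f (m x)) (fun x => g (m x))); auto.
  - apply (bgen_comp X F0X (fun x => f (m x))); auto.
  - apply (bgen_lim X F0X (fun n x => fs n (m x))); auto.
    intros eps He. destruct (H1 eps He) as [N HN]. exists N.
    intros n Hn x. apply HN; auto.
Qed.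

Section Main.
Variables (I : DirectedSet) (S : ContraSpectrum I) (C : Cofinal I).

Definition hfun (a : RelLim S C) : SpecLim S.
Proof.
  destruct a as [Phi HPhi].
  exists (fun i => lam1 S i (ce C (ccof C i)) (ccof_up I C i) (Phi (ccof C i))).
  intros i i' p.
  eapply bt.
  - apply lam1_resp. apply (HPhi (ccof C i) (ccof C i') (ccof_mono I C i i' p)).
  - pose proof (dle_trans I _ _ _ (ccof_up I C i) (ccof_mono I C i i' p)) as t.
    eapply bt. apply bs. apply (lam1_comp I S _ _ _ _ _ t).
    apply (lam1_comp I S _ _ _ p (ccof_up I C i') t).
Defined.

Definition gfun (a : SpecLim S) : RelLim S C.
Proof.
  destruct a as [Psi HPsi].
  exists (fun j => Psi (ce C j)).
  intros j j' p. apply HPsi.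
Defined.

End Main.

Theorem theorem10p5 (I : DirectedSet) (S : ContraSpectrum I) (C : Cofinal I) :
  BIso (RelLim S C) (SpecLim S).
Proof.
  exists (hfun I S C), (gfun I S C).
  split; [|split; [|split]].
  - split.
    + intros [a Ha] [b Hb] H i. simpl. apply lam1_resp. apply H.
    + intros g Hg. apply (BGen_pull _ _ _ (LimSubbase _ _ _ _ (topo S)) (hfun I S C)); auto.
      intros f [i [f0 [Hf0 Hf]]].
      apply bgen_base. exists (ccof C i).
      exists (fun y => f0 (lam1 S i (ce C (ccof C i)) (ccof_up I C i) y)).
      split. apply lam1_morph; auto.
      intros [a Ha]. rewrite Hf. reflexivity.
  - split.
    + intros [a Ha] [b Hb] H j. simpl. apply H.
    + intros g Hg. apply (BGen_pull _ _ _ (LimSubbase _ _ (fun j => lam0 S (ce C j)) (fun j j' p => lam1 S (ce C j) (ce C j') p) (fun j => topo S (ce C j))) (gfun I S C)); auto.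
      intros f [j [f0 [Hf0 Hf]]].
      apply bgen_base. exists (ce C j), f0.
      split; auto.
      intros [a Ha]. rewrite Hf. reflexivity.
  - intros [Phi HPhi] j. simpl.
    assert (E : beq (ce C (ccof C (ce C j))) (ce C j)).
    { apply (proj1 (ce_emb I C)). apply ccof_e. }
    assert (q : dle (ce C (ccof C (ce C j))) (ce C j)).
    { eapply dle_resp. apply bs, E. apply br. apply dle_refl. }
    eapply bt. apply lam1_resp. apply (HPhi _ _ q).
    eapply bt. apply bs. apply (lam1_comp I S _ _ _ _ _ (dle_refl I _)). apply lam1_id.
  - intros [Psi HPsi] i. simpl. apply bs. apply HPsi.
Qed.
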